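(* Let $K$ be a connected 4-regular simple graph with an odd number of vertices, let $v,w$ be adjacent vertices of $K$ with no common neighbour, let the neighbours of $w$ be $v,a,b,c$ and the neighbours of $v$ be $w,d,e,f$, and let $R=K-\{v,w\}$. Let $p_1\cup p_2$ be a partition of $\{a,b,c,d,e,f\}$ where $p_1$ consists either of all of $\{a,b,c\}$ together with exactly one of $\{d,e,f\}$, or of all of $\{d,e,f\}$ together with exactly one of $\{a,b,c\}$. Let $x$ be the element of $p_1$ which is alone from its trio. Let $\tau\in\mathcal{R}_{p_1,p_2}$ and let $t$ be the tree of the 2-forest of $\tau$ containing the vertices of $p_1$. Then there is a unique vertex $y$ with the following properties: (1) either $y\in p_1$ and $y$ has degree 2 in $t$, or $y\notin p_1$ and $y$ has degree 3 in $t$; (2) removing $y$ from $t$ gives a component containing exactly two vertices of $p_1$ and a component containing exactly one vertex of $p_1$; (3) either $x=y$ or $x$ lies in one of the components of $t-y$ containing exactly one vertex of $p_1$.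
   Context: A spanning 2-forest is a spanning forest with exactly two trees (a tree may be a single vertex). For a bipartition $P=\{P_1,P_2\}$ of a subset of $V(R)$, $\mathcal{R}_P$ is the set of bipartitions of $E(R)$ such that one part is the edge set of a spanning tree of $R$ and the other is the edge set of a spanning 2-forest of $R$ with one tree containing all vertices of $P_1$ and the other containing all vertices of $P_2$. In $R$ the vertices $a,\dots,f$ have degree 3 and all other vertices have degree 4. *)

(* Defs.v *)
From mathcomp Require Import all_boot.
Set Implicit Arguments. Unset Strict Implicit. Unset Printing Implicit Defensive.

(* Graphs on a finType V: edges are 2-element sets {x,y}.  An edge set is a
   {set {set V}}; subgraphs (trees, forests) are given by their edge sets. *)
Section Graphs.
Variable V : finType.

Definition sadj (S : {set {set V}}) : rel V :=
  fun x y => (x != y) && ([set x; y] \in S).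

Definition edges_on (adj : rel V) (W : {set V}) : {set {set V}} :=
  [set e | [exists x, exists y, [&& x \in W, y \in W, adj x y & e == [set x; y]]]].

Definition acyclic (S : {set {set V}}) : Prop :=
  forall c : seq V, 2 < size c -> uniq c -> ~~ cycle (sadj S) c.

Definition spanning_tree (W : {set V}) (E T : {set {set V}}) : Prop :=
  [/\ T \subset E, acyclic T &
      forall x y, x \in W -> y \in W -> connect (sadj T) x y].

Definition spanning_2forest_sep (W : {set V}) (E F : {set {set V}})
    (P1 P2 : {set V}) : Prop :=
  [/\ F \subset E, acyclic F &
    (exists r1 r2, [/\ r1 \in W, r2 \in W & ~~ connect (sadj F) r1 r2] /\
      [/\ (forall z, z \in W -> connect (sadj F) r1 z || connect (sadj F) r2 z),
      {subset P1 <= connect (sadj F) r1} &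
      {subset P2 <= connect (sadj F) r2}])].

Definition in_RP (W : {set V}) (E : {set {set V}}) (P1 P2 : {set V})
    (T F : {set {set V}}) : Prop :=
  [/\ T :|: F = E, T :&: F = set0, spanning_tree W E T &
      spanning_2forest_sep W E F P1 P2].

Definition tree_vertices (F : {set {set V}}) (r : V) : {set V} :=
  [set z | connect (sadj F) r z].

Definition deg_in (F : {set {set V}}) (Vt : {set V}) (y : V) : nat :=
  #|[set z in Vt | sadj F y z]|.

Definition adj_minus (F : {set {set V}}) (Vt : {set V}) (y : V) : rel V :=
  fun u z => [&& sadj F u z, u \in Vt, z \in Vt, u != y & z != y].

Definition comp_minus (F : {set {set V}}) (Vt : {set V}) (y z : V) : {set V} :=
  [set u | connect (adj_minus F Vt y) z u].

End Graphs.

(* Main.v *)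
Require Import Defs.
From mathcomp Require Import all_boot.
From Stdlib Require Import Classical.
Set Implicit Arguments. Unset Strict Implicit. Unset Printing Implicit Defensive.

Section Generic.
Variable T : finType.

Lemma connect_inv (e : rel T) (P : pred T) a b :
  connect e a b -> P a -> (forall u v, e u v -> P u -> P v) -> P b.
Proof.
move=> /connectP [p pth ->] Pa H; elim: p a pth Pa => //= c p IH a /andP[eac pth] Pa.
exact: (IH c pth (H _ _ eac Pa)).
Qed.

Lemma connect_restr (e : rel T) (P : pred T) a b :
  connect e a b -> (forall c, connect e a c -> P c) ->
  connect [rel u v | [&& e u v, P u & P v]] a b.
Proof.
move=> /connectP [p pth ->].
elim: p a pth => [|c p IH] a /=; first by rewrite connect0.
move=> /andP[eac pth] HP.
have Pa := HP a (connect0 _ _). have Pc := HP c (connect1 eac).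
have ac : [rel u v | [&& e u v, P u & P v]] a c by rewrite /= eac Pa Pc.
apply: (@connect_trans _ _ c); first exact: connect1.
apply: IH pth _ => d cd. apply: HP. exact: connect_trans (connect1 eac) cd.
Qed.

Lemma first_hit (e : rel T) (B : pred T) a b :
  connect e a b -> ~~ B a -> B b ->
  exists u v, [/\ connect [rel s t | [&& e s t, ~~ B s & ~~ B t]] a u, ~~ B u, B v & e u v].
Proof.
move=> /connectP [p pth ->]; elim: p a pth => [|c p IH] a /=.
  by move=> _ /negP nB /nB.
move=> /andP[eac pth] Ba Bl.
case Bc: (B c).
  by exists a, c; rewrite connect0 Ba Bc eac.
have [u [v [cu Bu Bv euv]]] := IH c pth (negbT Bc) Bl.
exists u, v; split=> //.
apply: connect_trans cu; apply: connect1; by rewrite /= eac Ba Bc.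
Qed.

Lemma card3 (a b c : T) : a != b -> a != c -> b != c -> #|[set a; b; c]| = 3.
Proof.
move=> ab ac bc.
rewrite -setUA cardsU1 cards2 bc !inE negb_or ab ac. done.
Qed.

Lemma card4 (a b c d : T) : a != b -> a != c -> a != d -> b != c -> b != d -> c != d ->
  #|[set a; b; c; d]| = 4.
Proof.
move=> ab ac ad bc bd cd.
rewrite -!setUA cardsU1 setUA card3 // !inE !negb_or ab ac ad. done.
Qed.

End Generic.

Lemma sadj_sym (V : finType) (F : {set {set V}}) : symmetric (sadj F).
Proof. by move=> a b; rewrite /sadj eq_sym setUC. Qed.

Section Tree.
Variables (V : finType) (F : {set {set V}}) (x : V).
Hypothesis Facy : acyclic F.
Local Notation Vt := (tree_vertices F x).
Local Notation cm y := (connect (adj_minus F Vt y)).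

Lemma am_sym y : symmetric (adj_minus F Vt y).
Proof.
move=> u z; rewrite /adj_minus sadj_sym.
by case: (u \in Vt); case: (z \in Vt); case: (u != y); case: (z != y); rewrite ?andbF.
Qed.

Lemma cm_sym y a b : cm y a b = cm y b a.
Proof. exact: (sym_connect_sym (am_sym y)). Qed.

Lemma cm_trans y a b c : cm y a b -> cm y b c -> cm y a c.
Proof. exact: connect_trans. Qed.

Lemma cm_notin y a b : cm y a b -> a \in Vt -> a != y -> (b \in Vt) && (b != y).
Proof.
move=> H aV ay.
apply: (connect_inv (P := fun u => (u \in Vt) && (u != y)) H); first by rewrite aV ay.
by move=> u v /and5P[_ _ -> _ ->].
Qed.

Lemma inVt u : (u \in Vt) = connect (sadj F) x u.
Proof. by rewrite inE. Qed.

Lemma xVt : x \in Vt.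
Proof. by rewrite inVt connect0. Qed.

Definition adjt := [rel a b | [&& sadj F a b, a \in Vt & b \in Vt]].

Lemma adjt_sym : symmetric adjt.
Proof. by move=> a b; rewrite /= sadj_sym; case: (a \in Vt); case: (b \in Vt); rewrite ?andbF. Qed.

Lemma adjt_conn u y : u \in Vt -> y \in Vt -> connect adjt u y.
Proof.
have H z : z \in Vt -> connect adjt x z.
  rewrite inVt => hz; apply: (connect_sub _ (connect_restr (P := mem Vt) hz _)).
    by move=> s t /= st; apply: connect1.
  by move=> c; rewrite -inVt.
move=> /H hu /H hy; rewrite (sym_connect_sym adjt_sym) in hu.
exact: connect_trans hu hy.
Qed.

Definition Nb y := [set z in Vt | sadj F y z].

Lemma nbr_exists y u : y \in Vt -> u \in Vt -> u != y ->
  exists2 n, n \in Nb y & cm y u n.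
Proof.
move=> yV uV uy.
have [u' [v [c1 B1 B2 e1]]] := first_hit (B := pred1 y) (adjt_conn uV yV) uy (eqxx y).
move: B2 e1 => /= /eqP -> /and3P[s1 u'V _].
exists u'; first by rewrite inE u'V sadj_sym.
apply: (connect_sub _ c1) => s t /= /and3P[/and3P[st sV tV] sy ty].
by apply: connect1; rewrite /adj_minus st sV tV sy ty.
Qed.

Lemma path_avoid y a p : path (adj_minus F Vt y) a p -> all (fun u => u != y) p.
Proof.
elim: p a => //= c p IH a /andP[/and5P[_ _ _ _ ->] /IH]. done.
Qed.

Lemma nbr_sep y n1 n2 : sadj F y n1 -> sadj F y n2 -> n1 != n2 -> ~~ cm y n1 n2.
Proof.
move=> h1 h2 neq; apply/negP => /connectP [p pth lst].
move: h2 neq; rewrite lst; case: (shortenP pth) => p' pth' up' _ h2 neq.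
have avoid := path_avoid pth'.
have yn1 : n1 != y by rewrite eq_sym; case/andP: h1.
have := Facy (c := y :: n1 :: p').
have sz : 2 < size (y :: n1 :: p') by move: neq; case: (p') => //=; rewrite eqxx.
move=> /(_ sz) H.
have uc : uniq (y :: n1 :: p').
  rewrite /= -/(uniq (n1 :: p')) up' andbT.
  rewrite in_cons eq_sym (negbTE yn1) /=.
  apply/negP => yin. by move/allP: avoid => /(_ y yin); rewrite eqxx.
move: (H uc); rewrite /cycle /= h1 rcons_path (sub_path _ pth') /=.
  by rewrite sadj_sym h2.
by move=> s t /andP[].
Qed.

Lemma nb_props y n : n \in Nb y -> [/\ n \in Vt, sadj F y n & n != y].
Proof. by rewrite inE => /andP[nV s]; rewrite nV s; case/andP: s => ? _; rewrite eq_sym. Qed.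

Lemma comp_disj y z u : y \in Vt -> sadj F y z -> cm y z u -> ~~ cm z y u.
Proof.
move=> yV yz hu; apply/negP => hz.
have zV : z \in Vt.
  rewrite inVt; apply: connect_trans (connect1 yz); by rewrite -inVt.
have zy : z != y by rewrite eq_sym; case/andP: yz.
have /andP[uV uy] := cm_notin hu zV zy.
rewrite cm_sym in hz.
have [u' [v [c1 B1 /eqP B2 e1]]] := first_hit (B := pred1 y) hz uy (eqxx y).
move: e1; rewrite B2 => /and5P[s1 u'V _ u'z _].
have h : cm y u u'.
  apply: (connect_sub _ c1) => s t /= /and3P[/and5P[st sV tV _ _] sy ty].
  by apply: connect1; rewrite /adj_minus st sV tV sy ty.
have := nbr_sep yz (_ : sadj F y u') (_ : z != u').
move=> /(_ _ _)/negP; apply; first by rewrite sadj_sym.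
  by rewrite eq_sym.
exact: cm_trans hu h.
Qed.

Lemma comp_move y1 y2 z u : y1 \in Vt -> y2 \in Vt -> y1 != y2 -> cm y1 z y2 ->
  u \in Vt -> u != y2 -> (u = y1 \/ ~~ cm y1 z u) -> cm y2 y1 u.
Proof.
move=> y1V y2V y12 hz uV uy2 H.
case: (eqVneq u y1) => [->|uy1]; first exact: connect0.
case: H => [e|nzu]; first by rewrite e eqxx in uy1.
have [n nN hn] := nbr_exists y1V uV uy1.
have [nV sn ny1] := nb_props nN.
have hP : forall c, cm y1 u c -> c != y2.
  move=> c hc; apply/eqP => ec; move: hc; rewrite ec => hc.
  move/negP: nzu; apply; apply: cm_trans hz _; by rewrite cm_sym.
have c1 := connect_restr hn hP.
have h1 : cm y2 u n.
  apply: (connect_sub _ c1) => s t /= /and3P[/and5P[st sV tV _ _] sy ty].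
  by apply: connect1; rewrite /adj_minus st sV tV sy ty.
rewrite cm_sym; apply: cm_trans h1 (connect1 _).
rewrite /adj_minus sadj_sym sn nV y1V (hP n hn) /=. exact: y12.
Qed.

Variable Q : {set V}.
Hypothesis QV : forall q, q \in Q -> q \in Vt.
Hypothesis xQ : x \notin Q.
Variable q0 : V.
Hypothesis q0Q : q0 \in Q.

Definition good y := y \in Vt /\ (y = x \/ (y <> x /\ forall q, q \in Q -> ~~ cm y x q)).
Definition stop y := y \in Q \/ ~ (exists z, [/\ z \in Vt, z != y & forall q, q \in Q -> cm y z q]).

Lemma walk k y : good y ->
  (y \notin Q -> forall z, z \in Vt -> z != y -> (forall q, q \in Q -> cm y z q) ->
     #|[set u | cm y z u]| <= k) ->
  exists y', good y' /\ stop y'.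
Proof.
elim: k y => [|k IH] y gy hb; (case: (classic (stop y)) => [sy|nsy]; first by exists y);
  (have [yQ [z [zV zy Qz]]] : y \notin Q /\ exists z, [/\ z \in Vt, z != y & forall q, q \in Q -> cm y z q]
    by move: nsy => /not_or_and [/negP ? /NNPP ?]);
  have yV := gy.1;
  have [nb nN hn] := nbr_exists yV zV zy;
  have [nV snb ny] := nb_props nN;
  (have Qn : forall q, q \in Q -> cm y nb q by move=> q /Qz; apply: cm_trans; rewrite cm_sym);
  have := hb yQ nb nV ny Qn.
  by rewrite leqn0 cards_eq0 => /eqP/setP/(_ nb); rewrite !inE connect0.
move=> hcard.
have xnot : ~~ cm y nb x.
  case: gy => _ [ex|[nx Qf]].
    apply/negP => H; have := cm_notin H nV ny; by rewrite -ex eqxx andbF.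
  apply/negP => H; move: (Qf q0 q0Q); rewrite (cm_trans _ (Qn q0 q0Q)) //; by rewrite cm_sym.
have xnb : x != nb by apply/eqP => e; move: xnot; rewrite e connect0.
have ynb : y != nb by rewrite eq_sym.
have hx : cm nb y x.
  apply: (comp_move yV nV ynb (connect0 _ nb) xVt xnb).
  case: gy => _ [ex|_]; [by left|by right].
have Qdisj : forall q, q \in Q -> ~~ cm nb y q.
  move=> q qQ; exact: comp_disj yV snb (Qn q qQ).
apply: (IH nb).
  split=> //; right; split; first by apply/eqP; rewrite eq_sym.
  move=> q qQ; apply/negP => H; move/negP: (Qdisj q qQ); apply.
  exact: cm_trans hx H.
move=> nQ z' z'V z'n Qz'.
rewrite -ltnS; apply: leq_trans hcard; apply: proper_card; apply/properP; split.
  apply/subsetP => u; rewrite !inE => hu; apply/negPn/negP => hnn.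
  have /andP[uV un] := cm_notin hu z'V z'n.
  have h2 := comp_move yV nV ynb (connect0 _ nb) uV un (or_intror hnn).
  have h3 : cm nb z' y by apply: cm_trans hu _; rewrite cm_sym.
  move/negP: (Qdisj q0 q0Q); apply; apply: cm_trans (Qz' q0 q0Q); by rewrite cm_sym.
exists nb; rewrite !inE ?connect0 //.
apply/negP => H; have := cm_notin H z'V z'n; by rewrite eqxx andbF.
Qed.

Lemma caseI y1 y2 : y1 != y2 -> good y1 -> good y2 -> stop y1 ->
  (y1 = x \/ ~~ cm y1 x y2) -> False.
Proof.
move=> y12 [y1V g1] [y2V g2] s1 hc.
have xy2 : x != y2.
  case: hc => [<-|h]; first by [].
  by apply/eqP => e; move: h; rewrite -e connect0.
have hx : cm y2 y1 x.
  apply: (comp_move y1V y2V y12 (connect0 _ y2) xVt xy2).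
  case: hc => [->|h]; [by left|by right; rewrite cm_sym].
have [_ Qf] : y2 <> x /\ forall q, q \in Q -> ~~ cm y2 x q.
  case: g2 => [e|//]; by move: xy2; rewrite e eqxx.
case: s1 => [y1Q|nz].
  by move/negP: (Qf y1 y1Q); apply; rewrite cm_sym.
apply: nz; exists y2; split=> //; first by rewrite eq_sym.
move=> q qQ; apply/negPn/negP => nq.
have qy2 : q != y2 by apply/eqP => e; move: nq; rewrite e connect0.
have := comp_move y1V y2V y12 (connect0 _ y2) (QV qQ) qy2 (or_intror nq).
move=> h; move/negP: (Qf q qQ); apply; apply: cm_trans h; by rewrite cm_sym.
Qed.

Lemma good_stop_uniq y1 y2 : good y1 -> good y2 -> stop y1 -> stop y2 -> y1 = y2.
Proof.
move=> g1 g2 s1 s2; apply/eqP/negPn/negP => y12.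
case: (classic (y1 = x \/ ~~ cm y1 x y2)) => [h|/not_or_and [n1 /negPn/negPn c1]].
  exact: (caseI y12 g1 g2 s1 h).
have y21 : y2 != y1 by rewrite eq_sym.
case: (classic (y2 = x \/ ~~ cm y2 x y1)) => [h|/not_or_and [n2 /negPn/negPn c2]].
  exact: (caseI y21 g2 g1 s2 h).
case: g1 => y1V [//|[_ Qf1]]. case: g2 => y2V [//|[_ Qf2]].
case: (eqVneq q0 y1) => [e|q0y1].
  by move/negP: (Qf2 q0 q0Q); apply; rewrite e.
have nq1 : ~~ cm y1 y2 q0.
  apply/negP => h; move/negP: (Qf1 q0 q0Q); apply; exact: cm_trans c1 h.
have q0y2 : q0 != y2 by apply/eqP => e; move: nq1; rewrite e connect0.
have := comp_move y1V y2V y12 (connect0 _ y2) (QV q0Q) q0y2 (or_intror nq1).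
move=> h; move/negP: (Qf2 q0 q0Q); apply; exact: cm_trans c2 h.
Qed.
End Tree.

Section Main.
Variables (V : finType) (F : {set {set V}}) (x q1 q2 q3 : V).
Hypothesis Facy : acyclic F.
Local Notation Vt := (tree_vertices F x).
Local Notation cm y := (connect (adj_minus F Vt y)).
Local Notation Q := [set q1; q2; q3].
Local Notation P := [set q1; q2; q3; x].
Hypotheses (d12 : q1 != q2) (d13 : q1 != q3) (d23 : q2 != q3).
Hypotheses (dx1 : x != q1) (dx2 : x != q2) (dx3 : x != q3).
Hypotheses (q1V : q1 \in Vt) (q2V : q2 \in Vt) (q3V : q3 \in Vt).
Hypothesis Hdeg3 : forall y, y \in Vt -> deg_in F Vt y <= 3.
Hypothesis Hdeg2 : forall y, y \in Vt -> y \in P -> deg_in F Vt y <= 2.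

Lemma inQ u : (u \in Q) = [|| u == q1, u == q2 | u == q3].
Proof. by rewrite !inE orbA. Qed.

Lemma inP u : (u \in P) = (u == x) || (u \in Q).
Proof. by rewrite !inE; case: (u == x); rewrite ?orbT ?orbF. Qed.

Lemma QV q : q \in Q -> q \in Vt.
Proof. by rewrite inQ => /or3P[]/eqP->. Qed.

Lemma xQ : x \notin Q.
Proof. by rewrite inQ !negb_or dx1 dx2 dx3. Qed.

Lemma q1Q : q1 \in Q.
Proof. by rewrite inQ eqxx. Qed.

Lemma cardQ : #|Q| = 3.
Proof. exact: card3. Qed.

Lemma compE y z u : (u \in comp_minus F Vt y z) = cm y z u.
Proof. by rewrite inE. Qed.

Lemma comp_eq y a b : cm y a b -> comp_minus F Vt y a = comp_minus F Vt y b.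
Proof.
move=> h; apply/setP => u; rewrite !compE; apply/idP/idP => H.
  by apply: cm_trans H; rewrite cm_sym.
exact: cm_trans h H.
Qed.

Lemma degE y : deg_in F Vt y = #|Nb F x y|.
Proof. by []. Qed.

Lemma nbr_distinct y u1 u2 n1 n2 : cm y u1 n1 -> cm y u2 n2 -> ~~ cm y u1 u2 -> n1 != n2.
Proof.
move=> h1 h2 n12; apply/eqP => e; move/negP: n12; apply.
apply: cm_trans h1 _; rewrite e cm_sym //.
Qed.

Lemma deg2 y u1 u2 : y \in Vt -> u1 \in Vt -> u2 \in Vt -> u1 != y -> u2 != y ->
  ~~ cm y u1 u2 -> 2 <= deg_in F Vt y.
Proof.
move=> yV u1V u2V u1y u2y s12.
have [n1 N1 h1] := nbr_exists yV u1V u1y.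
have [n2 N2 h2] := nbr_exists yV u2V u2y.
rewrite degE; apply: leq_trans (subset_leq_card (_ : [set n1; n2] \subset Nb F x y)).
  by rewrite cards2 (nbr_distinct h1 h2 s12).
move: N1 N2; rewrite !inE => N1 N2.
by apply/subsetP => u; rewrite !inE => /orP[]/eqP->.
Qed.

Lemma deg3 y u1 u2 u3 : y \in Vt -> u1 \in Vt -> u2 \in Vt -> u3 \in Vt ->
  u1 != y -> u2 != y -> u3 != y ->
  ~~ cm y u1 u2 -> ~~ cm y u1 u3 -> ~~ cm y u2 u3 -> 3 <= deg_in F Vt y.
Proof.
move=> yV u1V u2V u3V u1y u2y u3y s12 s13 s23.
have [n1 N1 h1] := nbr_exists yV u1V u1y.
have [n2 N2 h2] := nbr_exists yV u2V u2y.
have [n3 N3 h3] := nbr_exists yV u3V u3y.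
rewrite degE; apply: leq_trans (subset_leq_card (_ : [set n1; n2; n3] \subset Nb F x y)).
  by rewrite card3 // ?(nbr_distinct h1 h2) ?(nbr_distinct h1 h3) ?(nbr_distinct h2 h3).
move: N1 N2 N3; rewrite !inE => N1 N2 N3.
by apply/subsetP => u; rewrite !inE => /orP[/orP[]|]/eqP->.
Qed.

Lemma deg4 y u1 u2 u3 u4 : y \in Vt -> u1 \in Vt -> u2 \in Vt -> u3 \in Vt -> u4 \in Vt ->
  u1 != y -> u2 != y -> u3 != y -> u4 != y ->
  ~~ cm y u1 u2 -> ~~ cm y u1 u3 -> ~~ cm y u1 u4 -> ~~ cm y u2 u3 -> ~~ cm y u2 u4 ->
  ~~ cm y u3 u4 -> 4 <= deg_in F Vt y.
Proof.
move=> yV u1V u2V u3V u4V u1y u2y u3y u4y s12 s13 s14 s23 s24 s34.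
have [n1 N1 h1] := nbr_exists yV u1V u1y.
have [n2 N2 h2] := nbr_exists yV u2V u2y.
have [n3 N3 h3] := nbr_exists yV u3V u3y.
have [n4 N4 h4] := nbr_exists yV u4V u4y.
rewrite degE; apply: leq_trans (subset_leq_card (_ : [set n1; n2; n3; n4] \subset Nb F x y)).
  by rewrite card4 // ?(nbr_distinct h1 h2) ?(nbr_distinct h1 h3) ?(nbr_distinct h2 h3)
    ?(nbr_distinct h1 h4) ?(nbr_distinct h2 h4) ?(nbr_distinct h3 h4).
move: N1 N2 N3 N4; rewrite !inE => N1 N2 N3 N4.
by apply/subsetP => u; rewrite !inE => /orP[/orP[/orP[]|]|]/eqP->.
Qed.

Definition valid y :=
    [/\ y \in Vt,
        (y \in P /\ deg_in F Vt y = 2) \/ (y \notin P /\ deg_in F Vt y = 3),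
        (exists z, z \in Vt :\ y /\ #|comp_minus F Vt y z :&: P| = 2) /\
        (exists z, z \in Vt :\ y /\ #|comp_minus F Vt y z :&: P| = 1) &
        x = y \/ (exists z, [/\ z \in Vt :\ y, x \in comp_minus F Vt y z &
                                #|comp_minus F Vt y z :&: P| = 1])].

Lemma valid_good y : valid y -> good F x Q y.
Proof.
move=> [yV _ _ [e|[z [zVy xz c1]]]]; first by split=> //; left.
split=> //.
move: zVy; rewrite in_setD1 => /andP[zy zV].
rewrite compE in xz.
have /andP[_ xy] := cm_notin xz zV zy.
right; split; first by apply/eqP; rewrite eq_sym.
move=> q qQ; apply/negP => h.
have : #|[set x; q]| <= 1.
  rewrite -c1; apply: subset_leq_card; apply/subsetP => u; rewrite in_set2.
  case/orP => /eqP ->; rewrite in_setI compE.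
    by rewrite xz inP eqxx.
  by rewrite (cm_trans xz h) inP qQ orbT.
rewrite cards2; case: eqP => // e; by move: xQ; rewrite e qQ.
Qed.

Lemma valid_stop y : valid y -> stop F x Q y.
Proof.
case=> yV _ [[z2 [z2Vy c2]] _] _.
case: (classic (stop F x Q y)) => // /not_or_and [/negP yQ /NNPP [z0 [z0V z0y Qz0]]].
move: z2Vy; rewrite in_setD1 => /andP[z2y z2V].
have [q [qQ hq]] : exists q, q \in Q /\ cm y z2 q.
  apply: NNPP => nq.
  have : #|comp_minus F Vt y z2 :&: P| <= 1.
    rewrite -(cards1 x); apply: subset_leq_card; apply/subsetP => u.
    rewrite in_setI compE inP => /andP[hu /orP[|uQ]]; first by rewrite in_set1.
    by case: nq; exists u.
  by rewrite c2.
have e : comp_minus F Vt y z2 = comp_minus F Vt y z0.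
  apply: comp_eq; apply: cm_trans hq _; rewrite cm_sym; exact: Qz0.
have : #|Q| <= 2.
  rewrite -c2 e; apply: subset_leq_card; apply/subsetP => u uQ.
  by rewrite in_setI compE Qz0 // inP uQ orbT.
by rewrite cardQ.
Qed.

Lemma comp_x_count y : y != x -> (forall q, q \in Q -> ~~ cm y x q) ->
  #|comp_minus F Vt y x :&: P| = 1.
Proof.
move=> yx Qf; have -> : comp_minus F Vt y x :&: P = [set x]; last by rewrite cards1.
apply/setP => u.
rewrite in_setI compE in_set1 inP; apply/idP/idP.
  move=> /andP[h /orP[//|uQ]]; by move: (Qf u uQ); rewrite h.
by move=> /eqP->; rewrite connect0 eqxx.
Qed.

Lemma split_count y s1 s2 s3 : y \in Vt -> s1 \in Vt -> s3 \in Vt -> s1 != y -> s3 != y ->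
  s1 \in P -> s2 \in P -> s3 \in P -> s1 != s2 -> cm y s1 s2 -> ~~ cm y s1 s3 ->
  (forall p, p \in P -> p != y -> [\/ p = s1, p = s2, p = s3 | ~~ cm y s1 p && ~~ cm y s3 p]) ->
  #|comp_minus F Vt y s1 :&: P| = 2 /\ #|comp_minus F Vt y s3 :&: P| = 1.
Proof.
move=> yV s1V s3V s1y s3y s1P s2P s3P d h12 n13 hP3; split.
  have -> : comp_minus F Vt y s1 :&: P = [set s1; s2]; last by rewrite cards2 d.
  apply/setP => u; rewrite in_setI compE in_set2; apply/idP/idP.
    move=> /andP[h uP]; have /andP[_ uy] := cm_notin h s1V s1y.
    case: (hP3 u uP uy) => [->|->|e|/andP[n1 _]]; rewrite ?eqxx ?orbT //.
      by move: h; rewrite e (negbTE n13).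
    by rewrite h in n1.
  by move=> /orP[]/eqP->; rewrite ?connect0 ?s1P ?h12 ?s2P.
have -> : comp_minus F Vt y s3 :&: P = [set s3]; last by rewrite cards1.
apply/setP => u; rewrite in_setI compE in_set1; apply/idP/idP.
  move=> /andP[h uP]; have /andP[_ uy] := cm_notin h s3V s3y.
  case: (hP3 u uP uy) => [e|e|->|/andP[_ n3]]; rewrite ?eqxx //.
  - by move: n13; rewrite cm_sym -e h.
  - have : cm y s1 s3 by apply: cm_trans h12 _; rewrite cm_sym -e.
    by rewrite (negbTE n13).
  - by rewrite h in n3.
by move=> /eqP->; rewrite connect0 s3P.
Qed.

Lemma trio_case y s1 s2 s3 : y \in Vt -> y \notin Q ->
  s1 \in Q -> s2 \in Q -> s3 \in Q -> s1 != s2 ->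
  (forall p, p \in Q -> [\/ p = s1, p = s2 | p = s3]) ->
  cm y s1 s2 -> ~~ cm y s1 s3 ->
  (y != x -> forall q, q \in Q -> ~~ cm y x q) -> valid y.
Proof.
move=> yV yQ s1Q s2Q s3Q d12' hQ3 h12 n13 Qf.
have s1V := QV s1Q. have s3V := QV s3Q.
have sy s : s \in Q -> s != y by move=> sQ; apply/eqP => e; move: yQ; rewrite -e sQ.
have s1y := sy _ s1Q. have s3y := sy _ s3Q.
have sP s : s \in Q -> s \in P by move=> sQ; rewrite inP sQ orbT.
have hP3 : forall p, p \in P -> p != y ->
    [\/ p = s1, p = s2, p = s3 | ~~ cm y s1 p && ~~ cm y s3 p].
  move=> p; rewrite inP => /orP[/eqP -> xy|pQ _].
    have yx : y != x by rewrite eq_sym.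
    by apply: Or44; rewrite cm_sym (Qf yx _ s1Q) cm_sym (Qf yx _ s3Q).
  by case: (hQ3 p pQ) => ->; [apply: Or41|apply: Or42|apply: Or43].
have [c2 c1] := split_count yV s1V s3V s1y s3y (sP _ s1Q) (sP _ s2Q) (sP _ s3Q) d12' h12 n13 hP3.
have w1 : s1 \in Vt :\ y by rewrite in_setD1 s1y s1V.
have w3 : s3 \in Vt :\ y by rewrite in_setD1 s3y s3V.
case: (eqVneq y x) => [yx|yx].
  split=> //.
  have yP : y \in P by rewrite inP yx eqxx.
  - left; split=> //.
    apply/eqP; rewrite eqn_leq (Hdeg2 yV yP) /=.
    exact: deg2 yV s1V s3V s1y s3y n13.
  - by split; [exists s1|exists s3].
  - by left.
have xy : x != y by rewrite eq_sym.
split=> //.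
- right; split; first by rewrite inP negb_or yx yQ.
  apply/eqP; rewrite eqn_leq Hdeg3 //=.
  apply: (deg3 yV s1V s3V (xVt F x) s1y s3y xy n13).
    by rewrite cm_sym Qf.
  by rewrite cm_sym Qf.
- by split; [exists s1|exists s3].
- right; exists x; split.
  + by rewrite in_setD1 xy xVt.
  + by rewrite compE connect0.
  + exact: comp_x_count yx (Qf yx).
Qed.

Lemma caseQ y s1 s2 : y \in Vt -> y \in Q -> s1 \in Q -> s2 \in Q -> s1 != s2 ->
  s1 != y -> s2 != y ->
  (forall p, p \in Q -> [\/ p = y, p = s1 | p = s2]) ->
  (forall q, q \in Q -> ~~ cm y x q) -> valid y.
Proof.
move=> yV yQ s1Q s2Q d s1y s2y hQ Qf.
have yx : y != x by apply/eqP => e; move: xQ; rewrite -e yQ.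
have xy : x != y by rewrite eq_sym.
have yP : y \in P by rewrite inP yQ orbT.
have s1V := QV s1Q. have s2V := QV s2Q.
have n1x : ~~ cm y s1 x by rewrite cm_sym Qf.
have h12 : cm y s1 s2.
  apply/negPn/negP => n12.
  have n2x : ~~ cm y s2 x by rewrite cm_sym Qf.
  have := deg3 yV s1V s2V (xVt F x) s1y s2y xy n12 n1x n2x.
  by rewrite leqNgt ltnS Hdeg2.
have hP3 : forall p, p \in P -> p != y ->
    [\/ p = s1, p = s2, p = x | ~~ cm y s1 p && ~~ cm y x p].
  move=> p; rewrite inP => /orP[/eqP -> _|pQ py]; first by apply: Or43.
  case: (hQ p pQ) => [e|->|->]; [by rewrite e eqxx in py|by apply: Or41|by apply: Or42].
have s1P : s1 \in P by rewrite inP s1Q orbT.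
have s2P : s2 \in P by rewrite inP s2Q orbT.
have xP : x \in P by rewrite inP eqxx.
have [c2 c1] := split_count yV s1V (xVt F x) s1y xy s1P s2P xP d h12 n1x hP3.
split=> //.
- left; split=> //; apply/eqP; rewrite eqn_leq Hdeg2 //=.
  exact: deg2 yV s1V (xVt F x) s1y xy n1x.
- split; [exists s1|exists x]; split=> //; rewrite in_setD1 ?s1y ?s1V ?xy ?xVt //.
- right; exists x; split=> //; first by rewrite in_setD1 xy xVt.
  by rewrite compE connect0.
Qed.


Lemma gs_valid y : good F x Q y -> stop F x Q y -> valid y.
Proof.
move=> [yV gy] sy.
case: (boolP (y \in Q)) => yQ.
  have [yx Qf] : y <> x /\ (forall q, q \in Q -> ~~ cm y x q).
    case: gy => // e; by move: xQ; rewrite -e yQ.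
  have hQ a b c : a \in Q -> b \in Q -> c \in Q -> a != b -> a != c -> b != c ->
      (forall p, p \in Q -> [\/ p = a, p = b | p = c]) ->
      y = a -> valid y.
    move=> aQ bQ cQ ab ac bc h e; subst a.
    by apply: (caseQ yV yQ bQ cQ bc _ _ h Qf); rewrite eq_sym.
  have h3 p : p \in Q -> [\/ p = q1, p = q2 | p = q3].
    by rewrite inQ => /or3P[]/eqP->; [apply: Or31|apply: Or32|apply: Or33].
  have qQ1 : q1 \in Q by rewrite inQ eqxx.
  have qQ2 : q2 \in Q by rewrite inQ eqxx orbT.
  have qQ3 : q3 \in Q by rewrite inQ eqxx !orbT.
  have d21 : q2 != q1 by rewrite eq_sym.
  have d31 : q3 != q1 by rewrite eq_sym.
  have d32 : q3 != q2 by rewrite eq_sym.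
  move: (yQ); rewrite inQ => /or3P[]/eqP e.
  - exact: (hQ q1 q2 q3 qQ1 qQ2 qQ3 d12 d13 d23 h3 e).
  - apply: (hQ q2 q1 q3 qQ2 qQ1 qQ3 d21 d23 d13 _ e).
    by move=> p /h3 [->|->|->]; [apply: Or32|apply: Or31|apply: Or33].
  - apply: (hQ q3 q1 q2 qQ3 qQ1 qQ2 d31 d32 d12 _ e).
    by move=> p /h3 [->|->|->]; [apply: Or32|apply: Or33|apply: Or31].
have nz : ~ (exists z, [/\ z \in Vt, z != y & forall q, q \in Q -> cm y z q]).
  by case: sy => [h|//]; rewrite h in yQ.
have Qf : y != x -> forall q, q \in Q -> ~~ cm y x q.
  by move=> yx; case: gy => [e|[]//]; rewrite e eqxx in yx.
have sy' s : s \in Q -> s != y by move=> sQ; apply/eqP => e; move: yQ; rewrite -e sQ.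
have qQ1 : q1 \in Q by rewrite inQ eqxx.
have qQ2 : q2 \in Q by rewrite inQ eqxx orbT.
have qQ3 : q3 \in Q by rewrite inQ eqxx !orbT.
have h3 p : p \in Q -> [\/ p = q1, p = q2 | p = q3].
  by rewrite inQ => /or3P[]/eqP->; [apply: Or31|apply: Or32|apply: Or33].
case c12: (cm y q1 q2); case c13: (cm y q1 q3).
- case: nz; exists q1; split=> //; first exact: sy'.
  by move=> q /h3 [->|->|->]; rewrite ?connect0.
- apply: (trio_case yV yQ qQ1 qQ2 qQ3 d12 h3) => //. by rewrite c13.
- apply: (trio_case (s2 := q3) (s3 := q2) yV yQ qQ1 qQ3 qQ2 d13) => //; last by rewrite c12.
  by move=> p /h3 [->|->|->]; [apply: Or31|apply: Or33|apply: Or32].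
case c23: (cm y q2 q3).
- apply: (trio_case (s1 := q2) (s2 := q3) (s3 := q1) yV yQ qQ2 qQ3 qQ1 d23) => //.
    by move=> p /h3 [->|->|->]; [apply: Or33|apply: Or31|apply: Or32].
  by rewrite cm_sym c12.
exfalso.
have n12 : ~~ cm y q1 q2 by rewrite c12.
have n13 : ~~ cm y q1 q3 by rewrite c13.
have n23 : ~~ cm y q2 q3 by rewrite c23.
have d := deg3 yV q1V q2V q3V (sy' _ qQ1) (sy' _ qQ2) (sy' _ qQ3) n12 n13 n23.
case: (eqVneq y x) => [yx|yx].
  have yP : y \in P by rewrite inP yx eqxx.
  by move: (Hdeg2 yV yP); rewrite leqNgt d.
have xy : x != y by rewrite eq_sym.
have n1x : ~~ cm y q1 x by rewrite cm_sym Qf.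
have n2x : ~~ cm y q2 x by rewrite cm_sym Qf.
have n3x : ~~ cm y q3 x by rewrite cm_sym Qf.
have := deg4 yV q1V q2V q3V (xVt F x) (sy' _ qQ1) (sy' _ qQ2) (sy' _ qQ3) xy n12 n13 n1x n23 n2x n3x.
by rewrite leqNgt ltnS Hdeg3.
Qed.

Theorem main_abs : exists! y : V,
    [/\ y \in Vt,
        (y \in P /\ deg_in F Vt y = 2) \/ (y \notin P /\ deg_in F Vt y = 3),
        (exists z, z \in Vt :\ y /\ #|comp_minus F Vt y z :&: P| = 2) /\
        (exists z, z \in Vt :\ y /\ #|comp_minus F Vt y z :&: P| = 1) &
        x = y \/ (exists z, [/\ z \in Vt :\ y, x \in comp_minus F Vt y z &
                                #|comp_minus F Vt y z :&: P| = 1])].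
Proof.
have gx : good F x Q x by split; [exact: xVt|left].
have [y [gy sy]] := walk Facy q1Q (k := #|V|) gx (fun _ _ _ _ _ => max_card _).
exists y; split; first exact: gs_valid.
move=> y' vy'.
exact: (good_stop_uniq QV q1Q gy (valid_good vy') sy (valid_stop vy')).
Qed.

End Main.

Lemma card4_dist (T : finType) (a b c d : T) : #|[set a; b; c; d]| = 4 ->
  [&& a != b, a != c & a != d] && [&& b != c, b != d & c != d].
Proof.
rewrite -!setUA !cardsU1 cards1 !inE !negb_or.
by case: (a != b); case: (a != c); case: (a != d); case: (b != c); case: (b != d); case: (c != d).
Qed.

Lemma edge_dec (V : finType) (adj : rel V) (W : {set V}) y z :
  symmetric adj -> [set y; z] \in edges_on adj W -> y != z -> [&& adj y z, y \in W & z \in W].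
Proof.
move=> asym; rewrite inE => /existsP[x' /existsP[y' /and4P[hx hy ha /eqP he]]] yz.
have : y \in [set x'; y'] by rewrite -he set21.
have : z \in [set x'; y'] by rewrite -he set22.
rewrite !inE => /orP[]/eqP ez /orP[]/eqP ey; subst z y.
- by move: yz; rewrite eqxx.
- by rewrite asym ha hx hy.
- by rewrite ha hx hy.
- by move: yz; rewrite eqxx.
Qed.

Lemma deg_bound (V : finType) (adj : rel V) (W : {set V}) (T F : {set {set V}})
    (Vt : {set V}) y (B : {set V}) :
  symmetric adj -> T \subset edges_on adj W -> F \subset edges_on adj W -> T :&: F = set0 ->
  (forall u z, u \in W -> z \in W -> connect (sadj T) u z) ->
  (forall u, u \in B -> u \notin W) -> B \subset [set z | adj y z] ->
  #|[set z in Vt | sadj F y z]| <= #|[set z | adj y z]| - #|B| - 1.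
Proof.
move=> asym TE FE TF Tconn BW BN.
case: (set_0Vmem [set z in Vt | sadj F y z]) => [->|[z1 z1S]]; first by rewrite cards0.
move: (z1S); rewrite inE => /andP[_ /andP[yz1 e1]].
have /and3P[_ yW z1W] := edge_dec asym (subsetP FE _ e1) yz1.
have [c [Tc cW adc]] : exists c, [/\ [set y; c] \in T, c \in W & adj y c].
  move: (Tconn _ _ yW z1W) => /connectP[[|c p] pth ez].
    by move: yz1; rewrite ez eqxx.
  move: pth => /= /andP[/andP[yc Tc] _].
  have /and3P[a _ cW] := edge_dec asym (subsetP TE _ Tc) yc.
  by exists c.
have sub : [set z in Vt | sadj F y z] \subset ([set z | adj y z] :\: B) :\ c.
  apply/subsetP => z; rewrite !inE => /andP[_ /andP[yz Fz]].
  have /and3P[ayz _ zW] := edge_dec asym (subsetP FE _ Fz) yz.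
  rewrite ayz andbT; apply/andP; split.
    apply/eqP => ezc; move: TF => /setP/(_ [set y; z]); rewrite !inE Fz andbT ezc Tc.
    done.
  by apply/negP => /BW; rewrite zW.
apply: leq_trans (subset_leq_card sub) _.
have h := cardsD1 c ([set z | adj y z] :\: B).
have cin : c \in [set z | adj y z] :\: B.
  rewrite in_setD inE adc andbT; by apply/negP => /BW; rewrite cW.
rewrite cin cardsD (setIidPr BN) in h.
by rewrite h add1n subn1.
Qed.

Theorem lemma4p3 (V : finType) (adj : rel V)
  (adj_sym : symmetric adj) (adj_irr : irreflexive adj)
  (K_conn : forall u z : V, connect adj u z)
  (K_reg : forall u : V, #|[set z | adj u z]| = 4)
  (K_odd : odd #|V|)
  (v w a b c d e f : V)
  (hvw : adj v w)
  (hnocommon : forall z : V, ~~ (adj v z && adj w z))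
  (hNw : [set z | adj w z] = [set v; a; b; c])
  (hNv : [set z | adj v z] = [set w; d; e; f])
  (p1 p2 : {set V}) (x : V)
  (hpart : p1 :|: p2 = [set a; b; c; d; e; f])
  (hdisj : p1 :&: p2 = set0)
  (hp1 : (p1 = [set a; b; c; x] /\ x \in [set d; e; f]) \/
         (p1 = [set d; e; f; x] /\ x \in [set a; b; c]))
  (T F : {set {set V}})
  (htau : in_RP ([set: V] :\ v :\ w) (edges_on adj ([set: V] :\ v :\ w))
                p1 p2 T F) :
  let Vt := tree_vertices F x in
  exists! y : V,
    [/\ y \in Vt,
        (y \in p1 /\ deg_in F Vt y = 2) \/ (y \notin p1 /\ deg_in F Vt y = 3),
        (exists z, z \in Vt :\ y /\ #|comp_minus F Vt y z :&: p1| = 2) /\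
        (exists z, z \in Vt :\ y /\ #|comp_minus F Vt y z :&: p1| = 1) &
        x = y \/ (exists z, [/\ z \in Vt :\ y, x \in comp_minus F Vt y z &
                                #|comp_minus F Vt y z :&: p1| = 1])].
Proof.
move=> Vt.
case: htau => TF TiF [Tsub Tacy Tconn] [Fsub Facy [r1 [r2 [[r1W r2W nr] [cov P1s P2s]]]]].
have := K_reg w; rewrite hNw => /card4_dist /andP[/and3P[dva dvb dvc] /and3P[dab dac dbc]].
have := K_reg v; rewrite hNv => /card4_dist /andP[/and3P[dwd dwe dwf] /and3P[dde ddf def]].
have adjw u : u \in [set v; a; b; c] -> adj w u by rewrite -hNw inE.
have adjv u : u \in [set w; d; e; f] -> adj v u by rewrite -hNv inE.
have cross u u' : adj w u -> adj v u' -> u != u'.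
  move=> h1 h2; apply/eqP => eu; move: (hnocommon u); by rewrite -eu in h2; rewrite h2 h1.
have csym := sym_connect_sym (sadj_sym F).
have xp1 : x \in p1 by case: hp1 => [][-> _]; rewrite !inE eqxx !orbT.
have p1V u : u \in p1 -> u \in Vt.
  move=> up; rewrite /Vt inE; apply: connect_trans (P1s u up); rewrite csym; exact: P1s.
have Dw u : adj u w -> deg_in F Vt u <= 2.
  move=> hu; have := @deg_bound _ _ _ T F Vt u [set w] adj_sym Tsub Fsub TiF Tconn _ _.
  rewrite K_reg cards1; apply.
    by move=> z; rewrite in_set1 => /eqP->; rewrite !inE eqxx.
  by rewrite sub1set inE.
have Dv u : adj u v -> deg_in F Vt u <= 2.
  move=> hu; have := @deg_bound _ _ _ T F Vt u [set v] adj_sym Tsub Fsub TiF Tconn _ _.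
  rewrite K_reg cards1; apply.
    by move=> z; rewrite in_set1 => /eqP->; rewrite !inE eqxx andbF.
  by rewrite sub1set inE.
have Hdeg3 u : u \in Vt -> deg_in F Vt u <= 3.
  move=> _; have := @deg_bound _ _ _ T F Vt u set0 adj_sym Tsub Fsub TiF Tconn _ _.
  rewrite K_reg cards0; apply.
    by move=> z; rewrite inE.
  exact: sub0set.
have Hdeg2 u : u \in Vt -> u \in p1 -> deg_in F Vt u <= 2.
  move=> _ up; have : u \in [set a; b; c; d; e; f] by rewrite -hpart in_setU up.
  rewrite !inE => /orP[/orP[/orP[/orP[/orP[]|]|]|]|]/eqP->.
  - by apply: Dw; rewrite adj_sym adjw // !inE eqxx !orbT.
  - by apply: Dw; rewrite adj_sym adjw // !inE eqxx !orbT.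
  - by apply: Dw; rewrite adj_sym adjw // !inE eqxx !orbT.
  - by apply: Dv; rewrite adj_sym adjv // !inE eqxx !orbT.
  - by apply: Dv; rewrite adj_sym adjv // !inE eqxx !orbT.
  - by apply: Dv; rewrite adj_sym adjv // !inE eqxx !orbT.
have wa : adj w a by rewrite adjw // !inE eqxx !orbT.
have wb : adj w b by rewrite adjw // !inE eqxx !orbT.
have wc : adj w c by rewrite adjw // !inE eqxx !orbT.
have vd : adj v d by rewrite adjv // !inE eqxx !orbT.
have ve : adj v e by rewrite adjv // !inE eqxx !orbT.
have vf : adj v f by rewrite adjv // !inE eqxx !orbT.
case: hp1 => [][ep xin]; rewrite ep in Hdeg2 p1V *.
- have vx : adj v x.
    apply: adjv; move: xin; rewrite !inE => /orP[/orP[]|] h; by rewrite h ?orbT.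
  have dx q : adj w q -> x != q by move=> h; rewrite eq_sym; exact: cross h vx.
  apply: (main_abs Facy dab dac dbc (dx _ wa) (dx _ wb) (dx _ wc)) => //.
  + by apply: p1V; rewrite !inE eqxx ?orbT.
  + by apply: p1V; rewrite !inE eqxx ?orbT.
  + by apply: p1V; rewrite !inE eqxx ?orbT.
- have wx : adj w x.
    apply: adjw; move: xin; rewrite !inE => /orP[/orP[]|] h; by rewrite h ?orbT.
  have dx q : adj v q -> x != q by move=> h; exact: cross wx h.
  apply: (main_abs Facy dde ddf def (dx _ vd) (dx _ ve) (dx _ vf)) => //.
  + by apply: p1V; rewrite !inE eqxx ?orbT.
  + by apply: p1V; rewrite !inE eqxx ?orbT.
  + by apply: p1V; rewrite !inE eqxx ?orbT.
Qed.
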